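(* Let $\mathbb{X}$ be an $n$-dimensional real polyhedral Banach space and let $x,y_1,\dots,y_m\in \mathbb{X}$ with $1\le m<n$. Suppose $y_1,\dots,y_m$ are linearly independent and $x\notin \mathbb{Y}=\mathrm{span}\{y_1,\dots,y_m\}$. Let $\psi:\mathbb{X}\to \mathbb{X}^{**}$ denote the canonical isometric isomorphism. Suppose that every point of $\bigcap_{i=1}^m\mathcal{N}(\psi(y_i))\cap S_{\mathbb{X}^*}$ is a smooth point of $B_{\mathbb{X}^*}$. Then the best approximation to $x$ out of $\mathbb{Y}$ is unique.
   Context: A finite-dimensional real Banach space is polyhedral if its closed unit ball has finitely many extreme points. $B_{\mathbb{X}^*}$, $S_{\mathbb{X}^*}$ are the closed unit ball and unit sphere of $\mathbb{X}^*$. $\mathcal{N}(\psi(y))=\{x^*\in\mathbb{X}^*: x^*(y)=0\}$. A point $u\in S_{\mathbb{X}^*}$ is a smooth point of $B_{\mathbb{X}^*}$ if there is a unique $\phi\in\mathbb{X}^{**}$ with $\|\phi\|=1$ and $\phi(u)=1$. $y_0\in\mathbb{Y}$ is a best approximation to $x$ out of $\mathbb{Y}$ if $\|x-y_0\|=\inf_{y\in\mathbb{Y}}\|x-y\|$. *)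

(* Defs.v *)
(* The n-dimensional real Banach space X is modelled as 'rV[R]_n equipped with
   an arbitrary norm N (every n-dim real normed space is linearly isometric to
   such a space, and is automatically complete).
   The dual X^* is represented by column vectors u : 'cV_n acting by
   x |-> (x *m u) 0 0 (this is exactly the space of all linear functionals on
   'rV_n); the bidual X^** is represented by row vectors w : 'rV_n acting on
   X^* by u |-> (w *m u) 0 0. *)
From HB Require Import structures.
From mathcomp Require Import all_boot all_order all_algebra.
From mathcomp Require Import all_classical all_reals.
Set Implicit Arguments. Unset Strict Implicit. Unset Printing Implicit Defensive.
Import Order.TTheory GRing.Theory Num.Theory.
Local Open Scope ring_scope.
Local Open Scope classical_set_scope.

Section Defs.
Variables (R : realType) (n : nat).
Notation X := 'rV[R]_n.
Notation Xd := 'cV[R]_n.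
Notation Xdd := 'rV[R]_n.

Definition is_norm (N : X -> R) : Prop :=
  [/\ forall x, 0 <= N x,
      forall x, N x = 0 -> x = 0,
      forall (a : R) x, N (a *: x) = `|a| * N x
    & forall x y, N (x + y) <= N x + N y].

Definition ball_X (N : X -> R) : set X := [set x | N x <= 1].

Definition extreme_point (A : set X) (x : X) : Prop :=
  A x /\ forall (a b : X) (t : R), A a -> A b -> 0 < t < 1 ->
    x = t *: a + (1 - t) *: b -> a = b.

Definition polyhedral (N : X -> R) : Prop :=
  finite_set (extreme_point (ball_X N)).

Definition dual_eval (u : Xd) (x : X) : R := (x *m u) 0 0.

Definition dnorm (N : X -> R) (u : Xd) : R :=
  sup [set `|dual_eval u x| | x in ball_X N].

Definition ball_Xd (N : X -> R) : set Xd := [set u | dnorm N u <= 1].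
Definition sphere_Xd (N : X -> R) : set Xd := [set u | dnorm N u = 1].

Definition bidual_eval (w : Xdd) (u : Xd) : R := (w *m u) 0 0.

Definition ddnorm (N : X -> R) (w : Xdd) : R :=
  sup [set `|bidual_eval w u| | u in ball_Xd N].

Definition psi (y : X) : Xdd := y.
Lemma psiE (y : X) (u : Xd) : bidual_eval (psi y) u = dual_eval u y.
Proof. by []. Qed.

Definition null_space (w : Xdd) : set Xd := [set u | bidual_eval w u = 0].

Definition smooth_point (N : X -> R) (u : Xd) : Prop :=
  sphere_Xd N u /\
  exists! phi : Xdd, ddnorm N phi = 1 /\ bidual_eval phi u = 1.

Definition in_span (m : nat) (Y : 'M[R]_(m, n)) (z : X) : Prop := (z <= Y)%MS.

Definition best_approx (N : X -> R) (m : nat) (Y : 'M[R]_(m, n)) (x y0 : X) : Prop :=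
  in_span Y y0 /\ N (x - y0) = inf [set N (x - y) | y in in_span Y].

End Defs.

(* Main.v *)
Require Import Defs.
From mathcomp Require Import all_boot all_order all_algebra.
From mathcomp Require Import all_classical all_reals all_analysis.
From mathcomp Require Import lra zify.
Import Order.TTheory GRing.Theory Num.Theory.
Import numFieldNormedType.Exports.
Local Open Scope ring_scope.
Local Open Scope classical_set_scope.
Set Implicit Arguments. Unset Strict Implicit. Unset Printing Implicit Defensive.

Lemma N0 (R : realType) n (N : 'rV[R]_n -> R) : is_norm N -> N 0 = 0.
Proof. by case=> _ _ hZ _; rewrite -(scale0r 0) hZ normr0 mul0r. Qed.

Lemma NN (R : realType) n (N : 'rV[R]_n -> R) z : is_norm N -> N (- z) = N z.
Proof. by case=> _ _ hZ _; rewrite -scaleN1r hZ normrN normr1 mul1r. Qed.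

Lemma N_sum (R : realType) n (N : 'rV[R]_n -> R) (I : Type) (r : seq I) P F :
  is_norm N -> N (\sum_(i <- r | P i) F i) <= \sum_(i <- r | P i) N (F i).
Proof.
move=> hN; have [_ _ _ hD] := hN.
apply: (big_rec2 (fun a b => N a <= b)); first by rewrite N0.
by move=> i y1 y2 _ Hy; apply: le_trans (hD _ _) _; rewrite lerD2l.
Qed.

Lemma coord_le (R : realType) n (z : 'rV[R]_n) j : `|z 0 j| <= `|z|.
Proof.
rewrite [leRHS]/Num.norm /= mx_normrE; apply/bigmax_geP; right; by exists (0, j).
Qed.

Lemma N_upper (R : realType) n (N : 'rV[R]_n -> R) : is_norm N ->
  exists C, 0 <= C /\ forall z, N z <= C * `|z|.
Proof.
move=> hN; have [h0 _ hZ _] := hN.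
exists (\sum_(j < n) N 'e_j); split; first by apply: sumr_ge0 => j _.
move=> z; rewrite {1}(row_sum_delta z).
apply: le_trans (N_sum _ _ _ hN) _.
rewrite mulr_suml; apply: ler_sum => j _.
by rewrite hZ [leRHS]mulrC ler_wpM2r // coord_le.
Qed.

Lemma N_cont (R : realType) n (N : 'rV[R]_n -> R) : is_norm N -> continuous N.
Proof.
move=> hN; have [C [C0 HC]] := N_upper hN; have [_ _ _ hD] := hN.
have Hd x y : `|N x - N y| <= C * `|x - y|.
  apply: le_trans (HC _).
  have h1 : N y <= N x + N (y - x) by have := hD x (y - x); rewrite addrC subrK.
  have h2 : N x <= N y + N (x - y) by have := hD y (x - y); rewrite addrC subrK.
  have h3 : N (y - x) = N (x - y) by rewrite -opprB NN.
  rewrite ler_norml; apply/andP; split; lra.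
move=> x; apply/(@cvgrPdist_lt _ _ _ (nbhs x) (nbhs_filter x)) => e e0.
have e1 : 0 < e / (C + 1) by rewrite divr_gt0 // ltr_wpDl.
near=> t.
have Ht : `|x - t| < e / (C + 1) by near: t; apply: (@cvgr_dist_lt _ _ _ _ (nbhs_filter x) id x) => //; exact: cvg_id.
apply: le_lt_trans (Hd _ _) _.
have : C * `|x - t| <= (C + 1) * `|x - t| by rewrite ler_wpM2r // lerDl.
move/le_lt_trans; apply.
by rewrite -ltr_pdivlMl ?ltr_wpDl // mulrC.
Unshelve. all: by end_near.
Qed.

Lemma N_lower (R : realType) n (N : 'rV[R]_n.+1 -> R) : is_norm N ->
  exists c, 0 < c /\ forall z, c * `|z| <= N z.
Proof.
move=> hN; have [h0 h1 hZ _] := hN.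
pose K := [set z : 'rV[R]_n.+1 | `|z| = 1].
have Kc : compact K.
  apply: bounded_closed_compact.
    exists 1; split => // y y1 z Kz; rewrite /= Kz; exact: ltW.
  have -> : K = (fun z : 'rV[R]_n.+1 => `|z|) @^-1` [set r | r = 1] by [].
  exact: ((continuous_closedP _).1 (@norm_continuous _ _) _ (@closed_eq R 1)).
have Kn : K !=set0.
  pose v : 'rV[R]_n.+1 := 'e_0.
  have vn : `|v| != 0.
    rewrite normr_eq0; apply/eqP => /matrixP /(_ 0 0); rewrite !mxE /= => /eqP.
    by rewrite oner_eq0.
  exists (`|v|^-1 *: v); rewrite /K /= normrZ normfV normr_id mulVf //.
have Nc : {within K, continuous N} by apply: continuous_subspaceT; exact: N_cont.
have [c0 Kc0 Hc0] := EVT_min_rV Kn Kc Nc.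
exists (N c0); split.
  rewrite lt_def h0 andbT; apply/eqP => /h1 c00.
  by move: Kc0; rewrite inE /K /= c00 normr0 => /esym/eqP; rewrite oner_eq0.
move=> z; have [->|z0] := eqVneq z 0; first by rewrite normr0 mulr0 h0.
have zn : `|z| != 0 by rewrite normr_eq0.
have Kw : (`|z|^-1 *: z) \in K by rewrite inE /K /= normrZ normfV normr_id mulVf.
have := Hc0 _ Kw; rewrite hZ normfV normr_id.
by rewrite ler_pdivlMl ?normr_gt0 // mulrC.
Qed.

Lemma fun_bounded (R : realType) n (N : 'rV[R]_n -> R) (v : 'cV[R]_n) : is_norm N ->
  exists B, forall z, `|dual_eval v z| <= B * N z.
Proof.
case: n N v => [|n] N v hN.
  by exists 0 => z; rewrite mul0r /dual_eval mxE big_ord0 normr0.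
have [c [c0 Hc]] := N_lower hN.
exists ((\sum_j `|v j 0|) / c) => z.
rewrite /dual_eval mxE.
apply: le_trans (ler_norm_sum _ _ _) _.
have : \sum_j `|z 0 j * v j 0| <= \sum_j `|z| * `|v j 0|.
  by apply: ler_sum => j _; rewrite normrM ler_wpM2r // coord_le.
move/le_trans; apply.
rewrite -mulr_sumr mulrC -mulrA ler_wpM2l ?sumr_ge0 //.
by rewrite ler_pdivlMl // .
Qed.

Lemma de_D (R : realType) n (u : 'cV[R]_n) w z :
  dual_eval u (w + z) = dual_eval u w + dual_eval u z.
Proof. by rewrite /dual_eval mulmxDl mxE. Qed.
Lemma de_Z (R : realType) n (u : 'cV[R]_n) (c : R) w :
  dual_eval u (c *: w) = c * dual_eval u w.
Proof. by rewrite /dual_eval -scalemxAl mxE. Qed.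
Lemma de_Dr (R : realType) n (u v : 'cV[R]_n) w :
  dual_eval (u + v) w = dual_eval u w + dual_eval v w.
Proof. by rewrite /dual_eval mulmxDr mxE. Qed.
Lemma de_Zr (R : realType) n (u : 'cV[R]_n) (c : R) w :
  dual_eval (c *: u) w = c * dual_eval u w.
Proof. by rewrite /dual_eval -scalemxAr mxE. Qed.
Lemma de_N (R : realType) n (u : 'cV[R]_n) w :
  dual_eval u (- w) = - dual_eval u w.
Proof. by rewrite -scaleN1r de_Z mulN1r. Qed.

Lemma exists_sep (R : realType) n k (S : 'M[R]_(k, n)) (e : 'rV[R]_n) :
  ~~ (e <= S)%MS -> exists g : 'cV[R]_n, S *m g = 0 /\ dual_eval g e = 1.
Proof.
rewrite submxE => /eqP eK.
have [j Hj] : exists j, (e *m cokermx S) 0 j != 0.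
  apply/existsP; apply: contraT; rewrite negb_exists => /forallP H.
  case: eK; apply/matrixP => i j; rewrite [i]ord1 [RHS]mxE.
  by apply/eqP; move: (H j); rewrite negbK.
pose g0 : 'cV[R]_n := cokermx S *m delta_mx j 0.
have eg0 : dual_eval g0 e = (e *m cokermx S) 0 j by rewrite /dual_eval /g0 mulmxA -colE mxE.
exists (((e *m cokermx S) 0 j)^-1 *: g0); split.
  by rewrite scalemxAr /g0 mulmxA mulmx_coker mul0mx.
by rewrite de_Zr eg0 mulVf.
Qed.

Lemma HB_step (R : realType) n (N : 'rV[R]_n -> R) k (S : 'M[R]_(k, n))
  (u0 : 'cV[R]_n) (e : 'rV[R]_n) : is_norm N ->
  (forall w, (w <= S)%MS -> dual_eval u0 w <= N w) -> ~~ (e <= S)%MS ->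
  exists u1 : 'cV[R]_n, S *m u1 = S *m u0 /\
    forall w, (w <= S + e)%MS -> dual_eval u1 w <= N w.
Proof.
move=> hN Hd eS; have [h0 h1 hZ hD] := hN.
have [g [Sg ge]] := exists_sep eS.
have vanish w : (w <= S)%MS -> dual_eval g w = 0.
  by move=> /submxP [c ->]; rewrite /dual_eval -mulmxA Sg mulmx0 mxE.
pose A := [set r | exists2 w, (w <= S)%MS & r = dual_eval u0 w - N (w - e)].
have key w w' : (w <= S)%MS -> (w' <= S)%MS ->
    dual_eval u0 w - N (w - e) <= N (w' + e) - dual_eval u0 w'.
  move=> Sw Sw'; have := Hd (w + w') (addmx_sub Sw Sw'); rewrite de_D.
  have := hD (w - e) (w' + e).
  have -> : w - e + (w' + e) = w + w' by rewrite addrCA subrK addrC.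
  move=> H1 H2; lra.
pose a := sup A.
have A0 : A !=set0.
  by exists (dual_eval u0 0 - N (0 - e)); exists 0 => //; exact: sub0mx.
have Aub w' : (w' <= S)%MS -> ubound A (N (w' + e) - dual_eval u0 w').
  by move=> Sw' r [w Sw ->]; exact: key.
have Ale w : (w <= S)%MS -> dual_eval u0 w - N (w - e) <= a.
  move=> Sw; apply: sup_upper_bound; last by exists w.
  split; first exact: A0.
  by exists (N (0 + e) - dual_eval u0 0); apply: Aub; exact: sub0mx.
have aU w' : (w' <= S)%MS -> a <= N (w' + e) - dual_eval u0 w'.
  by move=> Sw'; apply: ge_sup A0 (Aub _ Sw').
pose u1 := u0 + (a - dual_eval u0 e) *: g.
exists u1; split.
  by rewrite /u1 mulmxDr -scalemxAr Sg scaler0 addr0.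
move=> w' /sub_addsmxP [[p q] /= ->].
have Sw : (p *m S <= S)%MS := submxMl p S.
move: Sw; set w := p *m S => Sw.
rewrite [q]mx11_scalar mul_scalar_mx; set t := q 0 0.
have u1w : dual_eval u1 w = dual_eval u0 w by rewrite de_Dr de_Zr vanish // mulr0 addr0.
have u1e : dual_eval u1 e = a by rewrite de_Dr de_Zr ge mulr1 addrC subrK.
rewrite de_D de_Z u1w u1e.
case: (ltrgtP t 0) => [tn|tp|->].
- have t0 : t != 0 by rewrite lt_eqF.
  have s0 : 0 < - t by rewrite oppr_gt0.
  have := Ale _ (scalemx_sub (- t)^-1 Sw).
  have -> : (- t)^-1 *: w - e = (- t)^-1 *: (w + t *: e).
    by rewrite scalerDr scalerA invrN mulNr mulVf // scaleN1r.
  rewrite hZ de_Z gtr0_norm ?invr_gt0 // -mulrBr ler_pdivrMl //.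
  move=> H; lra.
- have t0 : t != 0 by rewrite gt_eqF.
  have := aU _ (scalemx_sub t^-1 Sw).
  have -> : t^-1 *: w + e = t^-1 *: (w + t *: e).
    by rewrite scalerDr scalerA mulVf // scale1r.
  rewrite hZ de_Z gtr0_norm ?invr_gt0 // -mulrBr ler_pdivlMl //.
  move=> H; lra.
- by rewrite mul0r addr0 scale0r addr0; apply: Hd.
Qed.

Lemma HB_gen (R : realType) n (N : 'rV[R]_n -> R) (hN : is_norm N) d :
  forall k (S : 'M[R]_(k, n)) (u0 : 'cV[R]_n), (n - \rank S <= d)%N ->
  (forall w, (w <= S)%MS -> dual_eval u0 w <= N w) ->
  exists u : 'cV[R]_n, S *m u = S *m u0 /\ forall w, dual_eval u w <= N w.
Proof.
elim: d => [|d IH] k S u0 Hr Hd.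
  exists u0; split => // w; apply: Hd; apply: submx_full.
  by rewrite /row_full eqn_leq rank_leq_col /= -subn_eq0 -leqn0.
case: (pselect (forall w : 'rV[R]_n, (w <= S)%MS)) => [Hall|Hn].
  by exists u0; split => // w; exact: Hd.
have /existsNP [e eS] := Hn.
have eS' : ~~ (e <= S)%MS by apply/negP.
have [u1 [Su1 Hd1]] := HB_step hN Hd eS'.
have Hlt : (\rank S < \rank (S + e)%MS)%N.
  apply: rank_ltmx; rewrite ltmxE addsmxSl /=; apply/negP => H.
  by apply: eS; apply: submx_trans (addsmxSr S e) H.
have Hr' : (n - \rank (S + e)%MS <= d)%N.
  have := rank_leq_col (S + e)%MS; move: Hr Hlt.
  move: (\rank S) (\rank (S + e)%MS) => a b; lia.
have [u [Su Hu]] := IH _ _ _ Hr' Hd1.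
exists u; split => //; rewrite -Su1.
by have /submxP [A ->] := addsmxSl S e; rewrite -!mulmxA Su.
Qed.

Lemma de_sub (R : realType) n k (S : 'M[R]_(k, n)) (u v : 'cV[R]_n) w :
  (w <= S)%MS -> S *m u = S *m v -> dual_eval u w = dual_eval v w.
Proof. by move=> /submxP [A ->] H; rewrite /dual_eval -!mulmxA H. Qed.

Lemma de_van (R : realType) n k (S : 'M[R]_(k, n)) (u : 'cV[R]_n) w :
  (w <= S)%MS -> S *m u = 0 -> dual_eval u w = 0.
Proof. by move=> /submxP [A ->] H; rewrite /dual_eval -!mulmxA H mulmx0 mxE. Qed.

Lemma dnorm_ge (R : realType) n (N : 'rV[R]_n -> R) (v : 'cV[R]_n) p :
  is_norm N -> N p <= 1 -> `|dual_eval v p| <= dnorm N v.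
Proof.
move=> hN Np; have [B HB] := fun_bounded v hN.
apply: sup_upper_bound; last by exists p.
split; first by exists `|dual_eval v p|; exists p.
exists `|B| => r [x Nx <-]; apply: le_trans (HB x) _.
apply: (@le_trans _ _ (`|B| * N x)); first by rewrite ler_wpM2r ?ler_norm //; case: hN.
by rewrite -[leRHS]mulr1 ler_wpM2l.
Qed.

Lemma ddnorm_one (R : realType) n (N : 'rV[R]_n -> R) (u : 'cV[R]_n) p :
  is_norm N -> dnorm N u = 1 -> N p = 1 -> dual_eval u p = 1 -> ddnorm N p = 1.
Proof.
move=> hN du Np up.
have T0 : [set `|bidual_eval p v| | v in ball_Xd N] 1.
  by exists u; [rewrite /ball_Xd /= du | rewrite /bidual_eval -/(dual_eval u p) up normr1].
apply/le_anti/andP; split.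
  apply: ge_sup; first by exists 1.
  move=> r [v vB <-]; apply: le_trans (dnorm_ge v hN _) vB.
  by rewrite Np.
apply: sup_upper_bound => //; split; first by exists 1.
exists 1 => r [v vB <-]; apply: le_trans (dnorm_ge v hN _) vB.
by rewrite Np.
Qed.

Theorem theorem5p7 (R : realType) (n m : nat) (N : 'rV[R]_n -> R)
  (Y : 'M[R]_(m, n)) (x : 'rV[R]_n) :
  is_norm N -> polyhedral N ->
  (1 <= m)%N -> (m < n)%N ->
  row_free Y -> ~ in_span Y x ->
  (forall u : 'cV[R]_n,
     (forall i : 'I_m, null_space (psi (row i Y)) u) -> sphere_Xd N u ->
     smooth_point N u) ->
  forall y1 y2 : 'rV[R]_n,
    best_approx N Y x y1 -> best_approx N Y x y2 -> y1 = y2.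
Proof.
move=> hN _ _ _ _ xS Hsm y1 y2 [S1 E1] [S2 E2].
have [h0 h1 hZ hD] := hN.
move: E1 E2; set d := inf _ => E1 E2.
have lb y : in_span Y y -> d <= N (x - y).
  move=> Sy; apply: ge_inf; last by exists y.
  by exists 0 => r [z _ <-].
pose z1 := x - y1.
have z1S : ~~ (z1 <= Y)%MS.
  apply/negP => H; apply: xS; rewrite /in_span.
  have -> : x = z1 + y1 by rewrite /z1 subrK.
  exact: addmx_sub.
have Nz1 : N z1 = d by [].
have d0 : 0 < d.
  rewrite lt_def -Nz1 h0 andbT; apply/eqP => /h1 /eqP; rewrite subr_eq0 => /eqP xy.
  by apply: xS; rewrite xy.
have [g [Yg gz]] := exists_sep z1S.
pose u0 := d *: g.
have Hd0 w : (w <= Y + z1)%MS -> dual_eval u0 w <= N w.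
  move=> /sub_addsmxP [[p q] /= ->].
  rewrite [q]mx11_scalar mul_scalar_mx; set t := q 0 0.
  have Sp : (p *m Y <= Y)%MS := submxMl p Y.
  rewrite de_Zr de_D de_Z (de_van Sp Yg) gz add0r mulr1.
  have [->|t0] := eqVneq t 0; first by rewrite mulr0 scale0r addr0 h0.
  have -> : p *m Y + t *: z1 = t *: (x - (y1 - t^-1 *: (p *m Y))).
    by rewrite [in RHS]opprB [in RHS]addrCA [RHS]scalerDr scalerA mulfV // scale1r.
  rewrite hZ.
  have := lb (y1 - t^-1 *: (p *m Y)).
  have Hs : in_span Y (y1 - t^-1 *: (p *m Y)).
    by rewrite /in_span -scaleNr; apply: addmx_sub S1 (scalemx_sub _ Sp).
  move=> /(_ Hs) H.
  have Ht := ler_norm t; have Hn : 0 <= `|t| := normr_ge0 t.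
  nra.
have [u [Su Hu]] := @HB_gen _ _ _ hN n _ _ u0 (leq_subr _ _) Hd0.
have Hu' w : `|dual_eval u w| <= N w.
  have H := Hu (- w); rewrite de_N NN // in H.
  have H2 := Hu w.
  rewrite ler_norml; apply/andP; split; lra.
have YS : (Y <= Y + z1)%MS := addsmxSl Y z1.
have zS : (z1 <= Y + z1)%MS := addsmxSr Y z1.
have uz1 : dual_eval u z1 = d by rewrite (de_sub zS Su) de_Zr gz mulr1.
have vanY y : (y <= Y)%MS -> dual_eval u y = 0.
  move=> Hy; rewrite (de_sub (submx_trans Hy YS) Su) de_Zr (de_van Hy Yg) mulr0.
  by [].
have dnz : d != 0 by rewrite gt_eqF.
have du : dnorm N u = 1.
  apply/le_anti/andP; split.
    apply: ge_sup; first by exists `|dual_eval u 0|; exists 0 => //; rewrite /ball_X /= N0.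
    by move=> r [w Bw <-]; apply: le_trans (Hu' w) Bw.
  have Bz : ball_X N (d^-1 *: z1).
    by rewrite /ball_X /= hZ gtr0_norm ?invr_gt0 // Nz1 mulVf.
  by have := dnorm_ge u hN Bz; rewrite de_Z uz1 mulVf // normr1.
have sph : sphere_Xd N u := du.
have null i : null_space (psi (row i Y)) u.
  rewrite /null_space /= /bidual_eval /psi -/(dual_eval u (row i Y)).
  exact: vanY (row_sub i Y).
have [_ [phi [_ Hphi]]] := Hsm u null sph.
have P1 : ddnorm N (d^-1 *: z1) = 1 /\ bidual_eval (d^-1 *: z1) u = 1.
  have e1 : dual_eval u (d^-1 *: z1) = 1 by rewrite de_Z uz1 mulVf.
  split; last exact: e1.
  apply: (ddnorm_one hN du) => //.
  by rewrite hZ gtr0_norm ?invr_gt0 // Nz1 mulVf.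
have uz2 : dual_eval u (x - y2) = d.
  have -> : x - y2 = z1 + (y1 - y2) by rewrite /z1 addrA subrK.
  by rewrite de_D uz1 de_D de_N !vanY // subrr addr0.
have Nz2 : N (x - y2) = d by [].
have P2 : ddnorm N (d^-1 *: (x - y2)) = 1 /\ bidual_eval (d^-1 *: (x - y2)) u = 1.
  have e1 : dual_eval u (d^-1 *: (x - y2)) = 1 by rewrite de_Z uz2 mulVf.
  split; last exact: e1.
  apply: (ddnorm_one hN du) => //.
  by rewrite hZ gtr0_norm ?invr_gt0 // Nz2 mulVf.
have e1 := Hphi _ P1; have e2 := Hphi _ P2.
have : d^-1 *: z1 = d^-1 *: (x - y2) by rewrite -e1 -e2.
move/(congr1 (fun w => d *: w)); rewrite !scalerA mulfV // !scale1r => H.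
by apply: oppr_inj; apply: (addrI x).
Qed.
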